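(* Let $mG$ be a finite canonical misinformation game, $\Gamma=(\mathcal{AD}^*(\{mG\}),E)$ its adaptation graph, and $\Gamma'$ its loopless version. Then $\Gamma'$ is a directed acyclic graph.
   Context: A normal-form game is $G=\langle N,S,P\rangle$ with finite players $N$, finite pure strategy sets $S_i$, positions $S=\times_i S_i$, payoffs $P_i:S\to\mathbb{R}$. A misinformation game $mG=\langle G^0,G^1,\dots,G^{|N|}\rangle$ consists of the actual game $G^0$ and subjective games $G^i$; it is canonical if all $G^i=\langle N,S,P^i\rangle$ differ from $G^0$ only in payoffs and in every $G^i$ all players have equally many pure strategies. $NME(mG)$ is the set of profiles $\sigma=(\sigma_1,\dots,\sigma_{|N|})$ such that each $\sigma_i$ is player $i$'s component of some Nash equilibrium of $G^i$. $\chi(\sigma)=\mathrm{supp}(\sigma_1)\times\dots\times\mathrm{supp}(\sigma_{|N|})$. For $\vec v\in S$, $mG_{\vec v}$ is obtained by replacing, in every $P^i$ ($i\ge1$), the payoff vector at position $\vec v$ by $P^0(\vec v)$. For a set $M$ of misinformation games, $\mathcal{AD}(M)=\{mG_{\vec u}: mG\in M,\sigma\in NME(mG),\vec u\in\chi(\sigma)\}$, $\mathcal{AD}^{(0)}(M)=M$, $\mathcal{AD}^{(t+1)}(M)=\mathcal{AD}^{(t)}(\mathcal{AD}(M))$, $\mathcal{AD}^*(M)=\bigcup_{t\ge0}\mathcal{AD}^{(t)}(M)$. The adaptation graph $\Gamma$ is the directed graph with vertex set $\mathcal{AD}^*(\{mG\})$ and an edge $(mG^1,mG^2)$ iff $mG^2=(mG^1)_{\vec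 v}$ for some $\sigma\in NME(mG^1)$ and $\vec v\in\chi(\sigma)$. Its loopless version $\Gamma'$ has the same vertices and the edges of $\Gamma$ with $mG^1\neq mG^2$. *)

(* Defs.v *)
From HB Require Import structures.
From mathcomp Require Import all_boot all_order all_algebra.
From mathcomp Require Import reals.
From Stdlib Require Import Relations.
Set Implicit Arguments. Unset Strict Implicit. Unset Printing Implicit Defensive.
Import Order.TTheory GRing.Theory Num.Theory.
Local Open Scope ring_scope.

Section MisinfoGames.
Variable R : realType.
Variable n : nat.
Variable S : 'I_n -> finType.

Definition position := {dffun forall i : 'I_n, S i}.

Definition payoff := {ffun position -> {ffun 'I_n -> R}}.

(* A canonical misinformation game <G^0, G^1, ..., G^n>: all games share the
   players and the strategy sets, so it is given by the actual payoff P^0 and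
   the subjective payoffs P^i, i = 1..n (indexed here by the player i : 'I_n). *)
Definition mgame := (payoff * {ffun 'I_n -> payoff})%type.
Definition actual (mG : mgame) : payoff := mG.1.
Definition subj (mG : mgame) (i : 'I_n) : payoff := mG.2 i.

Definition profile := forall i : 'I_n, {ffun S i -> R}.
Definition is_mixed (i : 'I_n) (s : {ffun S i -> R}) : Prop :=
  (forall x, 0 <= s x) /\ \sum_x s x = 1.
Definition is_profile (sg : profile) : Prop := forall i, is_mixed (sg i).

Definition exp_payoff (P : payoff) (sg : profile) (j : 'I_n) : R :=
  \sum_(v : position) (\prod_(i < n) sg i (v i)) * P v j.

Definition nash (P : payoff) (sg : profile) : Prop :=
  is_profile sg /\
  forall (j : 'I_n) (tau : profile), is_profile tau ->
    (forall i, i != j -> tau i = sg i) ->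
    exp_payoff P tau j <= exp_payoff P sg j.

Definition NME (mG : mgame) (sg : profile) : Prop :=
  forall i : 'I_n, exists sg' : profile, nash (subj mG i) sg' /\ sg' i = sg i.

Definition chi (sg : profile) (v : position) : Prop :=
  forall i : 'I_n, 0 < sg i (v i).

Definition update (mG : mgame) (v : position) : mgame :=
  (actual mG, [ffun i => [ffun u => if u == v then actual mG v else subj mG i u]]).

Definition AD (M : mgame -> Prop) : mgame -> Prop :=
  fun mG' => exists (mG : mgame) (sg : profile) (u : position),
    M mG /\ NME mG sg /\ chi sg u /\ mG' = update mG u.

Fixpoint AD_iter (t : nat) (M : mgame -> Prop) : mgame -> Prop :=
  match t with
  | 0 => M
  | t'.+1 => AD_iter t' (AD M)
  end.

Definition AD_star (M : mgame -> Prop) : mgame -> Prop :=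
  fun x => exists t, AD_iter t M x.

Definition Gamma_vertex (mG : mgame) : mgame -> Prop := AD_star (fun x => x = mG).

Definition Gamma_edge (mG : mgame) (mG1 mG2 : mgame) : Prop :=
  Gamma_vertex mG mG1 /\ Gamma_vertex mG mG2 /\
  exists (sg : profile) (v : position), NME mG1 sg /\ chi sg v /\ mG2 = update mG1 v.

Definition Gamma'_edge (mG : mgame) (mG1 mG2 : mgame) : Prop :=
  Gamma_edge mG mG1 mG2 /\ mG1 <> mG2.

Definition acyclic (E : mgame -> mgame -> Prop) : Prop :=
  forall x, ~ clos_trans mgame E x x.

End MisinfoGames.

(* Main.v *)
Require Import Defs.
From mathcomp Require Import all_boot all_order all_algebra.
From mathcomp Require Import reals.
From Stdlib Require Import Relations.

Section Aux.
Variable R : realType.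
Variable n : nat.
Variable S : 'I_n -> finType.

Definition mism (mG : mgame R S) : {set ('I_n * position S)} :=
  [set p | subj mG p.1 p.2 != actual mG p.2].

Lemma mism_update (mG : mgame R S) (v : position S) :
  update mG v <> mG -> mism (update mG v) \proper mism mG.
Proof.
move=> Hne; apply/properP; split.
  apply/subsetP=> [[i u]]; rewrite !inE /subj /actual /update /= !ffunE.
  by case: (u =P v) => [->|]; rewrite ?eqxx.
have [i Hi] : exists i, subj mG i v != actual mG v.
  case: (boolP [exists i, subj mG i v != actual mG v]) => [/existsP //|].
  rewrite negb_exists => /forallP H; exfalso; apply: Hne.
  case: mG H => [a b] H; rewrite /update /actual /=; congr pair.
  apply/ffunP=> i; rewrite ffunE; apply/ffunP=> u; rewrite ffunE.
  case: (u =P v) => [->|//]; move: (H i); rewrite negbK => /eqP.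
  by rewrite /subj /actual /=.
exists (i, v); first by rewrite inE.
by rewrite inE negbK /= /update /subj /actual /= !ffunE eqxx.
Qed.

Lemma edge_dec (mG mG1 mG2 : mgame R S) :
  Gamma'_edge mG mG1 mG2 -> #|mism mG2| < #|mism mG1|.
Proof.
move=> [[_ [_ [sg [v [_ [_ ->]]]]]] Hne].
apply: proper_card; apply: mism_update => H; apply: Hne; by rewrite H.
Qed.

End Aux.

Theorem proposition17 (R : realType) (n : nat) (S : 'I_n -> finType)
  (Hcanon : forall i j : 'I_n, #|S i| = #|S j|)
  (mG : mgame R S) :
  acyclic (Gamma'_edge mG).
Proof.
move=> x H.
have key : forall a b, clos_trans _ (Gamma'_edge mG) a b -> #|@mism R n S b| < #|@mism R n S a|.
  move=> a b; elim=> [y z /edge_dec //| y z w _ H1 _ H2].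
  exact: ltn_trans H2 H1.
by move: (key _ _ H); rewrite ltnn.
Qed.
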